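(* Restrict each worker's strategy set to dropping strategies. Consider any economy $\mathcal{E}$ (as in the context) such that either (1) no market $\mathcal{M}(\theta)$, $\theta\in\Theta$, has a preference cycle, or (2) $\mathcal{E}$ satisfies the SPC*. Then, considering Bayesian Nash equilibria in which firms report truthfully and workers use dropping strategies, $\mathcal{E}$ has a unique BNE outcome, namely the one that yields in each state $\theta$ the unique stable matching (for the true preferences) of $\mathcal{M}(\theta)$.
   Context: Matching market: $\mathcal{M}=(F,W,U)$ with finite firms $F=\{f_i\}_{i\in[m]}$, finite workers $W=\{w_j\}_{j\in[n]}$, utilities $u^f_{ij}$ of firm $f_i$ from worker $w_j$ and $u^w_{ij}$ of worker $w_j$ from firm $f_i$; unmatched utility is $0$; all preferences strict; all pairs mutually acceptable. An economy is $\mathcal{E}=(F,W,\{U(\theta)\}_{\theta\in\Theta},\Theta,\Psi)$ with finite $\Theta$, full-support prior $\Psi$, market $\mathcal{M}(\theta)=(F,W,U(\theta))$ in state $\theta$; workers' utilities are state-independent, firms' may depend on $\theta$. Standing assumption: each $\mathcal{M}(\theta)$ has a unique stable matching. Game: $\theta$ drawn by $\Psi$; firms observe $\theta$; each worker knows only his own preferences; all simultaneously submit rank-ordered lists of acceptable partners; firm-proposing Deferred Acceptance is run on the reports. Firms report truthfully; a BNE is a profile where each worker's reported list maximizes his expected utility under $\Psi$ within his allowed strategy set. The outcome of a BNE is the matching produced in each state. A dropping strategy for a worker declares some (possibly no) firms unacceptable and ranks the remaining firms in their true order. A preference cycle in a market is a sequence of distinct firms $f^1,\dots,f^k$ and distinct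 workers $w^1,\dots,w^k$, $k\ge 2$, such that (indices mod $k$) each $f^t$ prefers $w^t$ to $w^{t-1}$ and each $w^t$ prefers $f^{t+1}$ to $f^t$ (the ''aligned preferences condition'' is the absence of such cycles). Sub-market, top-top match, SPC: a sub-market restricts to $F'\subseteq F$, $W'\subseteq W$; $(f,w)$ is a top-top match of it if each is the other's favorite in it; a market satisfies the SPC if there are orderings $f_1,\dots,f_m$, $w_1,\dots,w_n$ with $(f_i,w_i)$ a top-top match of the sub-market induced by $\{f_j,w_j\}_{j\ge i}$ for each $i\le\min(m,n)$ (order $i$). An economy satisfies the SPC if each $\mathcal{M}(\theta)$ does with possibly state-specific orderings $f_{i|\theta}$, $w_{i|\theta}$; it satisfies the SPC* if moreover, for every $\theta$, $i\le\min(m,n)$ and firm $f$: if $w_{i|\theta}$ strictly prefers $f$ to $f_{i|\theta}$, then for every state $\theta'$ there is $i'<i$ with $f=f_{i'|\theta'}$. *)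

(* Defs.v *)
From mathcomp Require Import all_boot all_order all_algebra.
From mathcomp Require Import fingroup perm.
Set Implicit Arguments. Unset Strict Implicit. Unset Printing Implicit Defensive.
Import Order.TTheory GRing.Theory Num.Theory.
Local Open Scope ring_scope.

(* Firms are 'I_m, workers are 'I_n, utilities take values in a real field R.
   uf i j : utility of firm f_i from worker w_j (in a given state);
   uw i j : utility of worker w_j from firm f_i (state independent).
   Being unmatched gives utility 0. *)

Section Market.
Variables (R : realFieldType) (m n : nat).
Variables (uf : 'I_m -> 'I_n -> R) (uw : 'I_m -> 'I_n -> R).

Definition matching := {ffun 'I_n -> option 'I_m}.

Definition is_matching (mu : matching) : Prop :=
  forall (j j' : 'I_n) (i : 'I_m), mu j = Some i -> mu j' = Some i -> j = j'.

Definition worker_util (mu : matching) (j : 'I_n) : R :=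
  if mu j is Some i then uw i j else 0.

Definition firm_util (mu : matching) (i : 'I_m) : R :=
  if [pick j | mu j == Some i] is Some j then uf i j else 0.

Definition stable (mu : matching) : Prop :=
  [/\ is_matching mu,
      (forall i j, mu j = Some i -> 0 <= uf i j /\ 0 <= uw i j)
    & (forall i j, ~ (firm_util mu i < uf i j /\ worker_util mu j < uw i j))].

(* A preference cycle f^1..f^k, w^1..w^k (indices modulo k, 0-based here):
   f^t prefers w^t to w^(t-1), and w^t prefers f^(t+1) to f^t. *)
Definition pref_cycle : Prop :=
  exists (k : nat) (f : 'I_k -> 'I_m) (w : 'I_k -> 'I_n),
    [/\ (2 <= k)%N, injective f, injective w,
        (forall t : 'I_k, uf (f t) (w (ord_pred t)) < uf (f t) (w t))
      & (forall t : 'I_k, uw (f t) (w t) < uw (f (ordS t)) (w t))].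

(* The SPC with orderings given by permutations: position p |-> firm sf p,
   position q |-> worker sw q (0-based positions).  For every common position
   p = q < min(m,n), (sf p, sw q) is a top-top match of the sub-market induced
   by the firms and workers at positions >= p. *)
Definition SPC_with (sf : {perm 'I_m}) (sw : {perm 'I_n}) : Prop :=
  forall (p : 'I_m) (q : 'I_n), val p = val q ->
    (forall q' : 'I_n, (val q < val q')%N -> uf (sf p) (sw q') < uf (sf p) (sw q)) /\
    (forall p' : 'I_m, (val p < val p')%N -> uw (sf p') (sw q) < uw (sf p) (sw q)).

(* Firms report their true full ranking (all workers acceptable); worker j
   uses a dropping strategy: acceptable set acc j, ranked in the true order.
   The state of the algorithm records, for each firm, the set of workers who
   have rejected it. *)

Definition best {T : finType} (A : {set T}) (u : T -> R) : option T :=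
  [pick x in A | [forall y in A, u y <= u x]].

Variable acc : 'I_n -> {set 'I_m}.

Definition DA_propose (rej : 'I_m -> {set 'I_n}) (i : 'I_m) : option 'I_n :=
  best (~: rej i) (uf i).

Definition DA_holder (rej : 'I_m -> {set 'I_n}) (j : 'I_n) : option 'I_m :=
  best [set i in acc j | DA_propose rej i == Some j] (fun i => uw i j).

Definition DA_step (rej : 'I_m -> {set 'I_n}) : 'I_m -> {set 'I_n} :=
  fun i => if DA_propose rej i is Some j then
             (if DA_holder rej j == Some i then rej i else j |: rej i)
           else rej i.

(* Each non-terminal round adds a rejection, so after m*n rounds the
   algorithm has terminated. *)
Definition DA_rejections : 'I_m -> {set 'I_n} :=
  iter (m * n).+1 DA_step (fun _ => set0).

Definition DA : matching := [ffun j => DA_holder DA_rejections j].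

End Market.

Section Economy.
Variables (R : realFieldType) (m n : nat) (Theta : finType).
Variables (uf : Theta -> 'I_m -> 'I_n -> R) (uw : 'I_m -> 'I_n -> R)
          (Psi : Theta -> R).

Definition economy : Prop :=
  [/\ (forall th, 0 < Psi th) /\ \sum_th Psi th = 1,
      (forall th i, injective (uf th i)),
      (forall j, injective (fun i => uw i j)),
      (forall th i j, 0 < uf th i j)                (* all pairs mutually *)
    & (forall i j, 0 < uw i j)].                    (*   acceptable        *)

Definition unique_stable : Prop :=
  forall th, exists mu, stable (uf th) uw mu /\
    forall mu', stable (uf th) uw mu' -> mu' = mu.

Definition no_pref_cycle : Prop := forall th, ~ pref_cycle (uf th) uw.

Definition SPC_star : Prop :=
  exists (sf : Theta -> {perm 'I_m}) (sw : Theta -> {perm 'I_n}),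
    (forall th, SPC_with (uf th) uw (sf th) (sw th)) /\
    (forall th (p : 'I_m) (q : 'I_n) (f : 'I_m), val p = val q ->
       uw (sf th p) (sw th q) < uw f (sw th q) ->
       forall th', exists p' : 'I_m, (val p' < val p)%N /\ f = sf th' p').

(* Strategy profile of workers: dropping strategies, i.e. the set of firms
   each worker declares acceptable (ranked in true order). *)
Definition profile := 'I_n -> {set 'I_m}.

Definition outcome (s : profile) (th : Theta) : matching m n :=
  DA (uf th) uw s.

Definition exp_util (s : profile) (j : 'I_n) : R :=
  \sum_th Psi th * worker_util uw (outcome s th) j.

Definition deviate (s : profile) (j : 'I_n) (A : {set 'I_m}) : profile :=
  fun j' => if j' == j then A else s j'.

Definition BNE (s : profile) : Prop :=
  forall (j : 'I_n) (A : {set 'I_m}), exp_util (deviate s j A) j <= exp_util s j.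

End Economy.

(* Main.v *)
Require Import Defs.
From mathcomp Require Import all_boot all_order all_algebra.
From mathcomp Require Import fingroup perm.
From Stdlib Require Import FunctionalExtensionality.
Set Implicit Arguments. Unset Strict Implicit. Unset Printing Implicit Defensive.
Import Order.TTheory GRing.Theory Num.Theory.
Local Open Scope ring_scope.

Section Best.
Variable (R : realFieldType) (T : finType).

Lemma bestP (A : {set T}) (u : T -> R) x :
  best A u = Some x -> x \in A /\ (forall y, y \in A -> u y <= u x).
Proof.
rewrite /best; case: pickP => // y /andP[yA /forallP H] [<-]; split => // z zA.
by move: (H z); rewrite zA.
Qed.

Lemma best_None (A : {set T}) (u : T -> R) x :
  x \in A -> exists y, best A u = Some y.
Proof.
move=> xA; rewrite /best; case: pickP => [y _|H]; first by exists y.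
case: (arg_maxP u xA) => i iA Hi.
have iA2 : i \in A := iA.
move: (H i) => /=; rewrite iA2 /=; move/negP; case; apply/forallP => y.
by apply/implyP => yA; apply: Hi.
Qed.
End Best.

Section Orbit.
Variables (T : finType) (phi : T -> T) (P : T -> Prop) (w : T).
Hypothesis Pw : P w.
Hypothesis Pphi : forall x, P x -> P (phi x).
Hypothesis phiinj : forall x y, P x -> P y -> phi x = phi y -> x = y.

Lemma P_iter t : P (iter t phi w).
Proof. by elim: t => //= t IH; apply: Pphi. Qed.

Lemma iter_cancel a d : iter (a + d) phi w = iter a phi w -> iter d phi w = w.
Proof.
elim: a => [//|a IH]; rewrite addSn /= => E; apply: IH.
by apply: phiinj E; apply: P_iter.
Qed.

Lemma orbit_cycle : exists k, [/\ (0 < k)%N, iter k phi w = w &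
  forall a b, (a < k)%N -> (b < k)%N -> iter a phi w = iter b phi w -> a = b].
Proof.
pose g (t : 'I_(#|T|.+1)) := iter t phi w.
have [a [b [Hab Eab]]] : exists a b, a != b /\ g a = g b.
  case: (boolP [exists a, exists b, (a != b) && (g a == g b)]).
    by move/existsP => [a /existsP [b /andP [H1 /eqP H2]]]; exists a, b.
  move=> H; have Hinj : injective g.
    move=> a b Hg; apply/eqP; case: (boolP (a == b)) => // Hne; exfalso; move/negP: H; apply.
    by apply/existsP; exists a; apply/existsP; exists b; rewrite Hne Hg eqxx.
  by move: (leq_card g Hinj); rewrite card_ord ltnn.
have Hex : exists d, (0 < d)%N && (iter d phi w == w).
  wlog Hlt : a b Hab Eab / (a < b)%N.
    move=> Hw; case: (ltngtP a b) => H; first exact: (Hw a b).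
      by apply: (Hw b a) => //; rewrite eq_sym.
    by move: Hab; rewrite (val_inj H) eqxx.
  exists (b - a)%N; rewrite subn_gt0 Hlt /=; apply/eqP; apply: (@iter_cancel a).
  by rewrite subnKC ?(ltnW Hlt) //; move: Eab; rewrite /g.
exists (ex_minn Hex); case: ex_minnP => k /andP [Hk /eqP Hkw] Hmin; split => //.
clear a b Hab Eab.
have D : forall a b, (a < b)%N -> (b < k)%N -> iter a phi w = iter b phi w -> False.
  move=> a b Hab Hb E.
  have := Hmin (b - a)%N; rewrite subn_gt0 Hab /=.
  have -> : iter (b - a) phi w == w by apply/eqP; apply: (@iter_cancel a); rewrite subnKC ?(ltnW Hab).
  move=> /(_ isT) H; move: (leq_ltn_trans H (leq_ltn_trans (leq_subr a b) Hb)); by rewrite ltnn.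
move=> a b Ha Hb E; case: (ltngtP a b) => // H.
  by case: (D a b).
by case: (D b a).
Qed.

Lemma iter_period k : iter k phi w = w -> forall a, iter a phi w = iter (a %% k) phi w.
Proof.
move=> Hk a.
have Hq : forall q, iter (q * k) phi w = w.
  by elim=> [|q IH] //; rewrite mulSn iterD IH.
by rewrite {1}(divn_eq a k) addnC iterD Hq.
Qed.
End Orbit.

Section Cycle.
Variables (R : realFieldType) (m n : nat).
Variables (uf : 'I_m -> 'I_n -> R) (uw : 'I_m -> 'I_n -> R).
Variables (alpha beta : matching m n) (P : 'I_n -> Prop) (w : 'I_n).
Hypothesis Ma : is_matching alpha.
Hypothesis Mb : is_matching beta.
Hypothesis Pw : P w.
Hypothesis S1 : forall x, P x -> exists g y,
  [/\ alpha x = Some g, beta y = Some g, P y & uf g x < uf g y].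
Hypothesis S2 : forall x g h, P x -> beta x = Some g -> alpha x = Some h -> uw g x < uw h x.

Definition phi x := odflt x [pick y | beta y == alpha x].

Lemma phiP x : P x -> exists g,
  [/\ alpha x = Some g, beta (phi x) = Some g, P (phi x) & uf g x < uf g (phi x)].
Proof.
move=> Px; case: (S1 Px) => g [y [Ha Hb Py Hlt]].
rewrite /phi; case: pickP => [y' /eqP Hy'|H]; last by move: (H y); rewrite Hb Ha eqxx.
have E : y' = y by apply: (Mb (i := g)); [rewrite Hy' Ha | exact: Hb].
by subst y'; exists g; split.
Qed.

Lemma phi_inj x y : P x -> P y -> phi x = phi y -> x = y.
Proof.
move=> Px Py E; case: (phiP Px) => g [Hx Hb _ _]; case: (phiP Py) => g' [Hy Hb' _ _].
move: Hb'; rewrite -E Hb => -[E']; subst g'.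
exact: (Ma Hx Hy).
Qed.

Lemma build_cycle : pref_cycle uf uw.
Proof.
have Pphi : forall x, P x -> P (phi x) by move=> x /phiP [g [_ _ H _]].
case: (orbit_cycle Pw Pphi phi_inj) => k [Hk Hkw Hd].
have Pit := P_iter Pw Pphi.
case: (phiP Pw) => g0 [Hg0 _ _ _].
have k2 : (2 <= k)%N.
  case: k Hk Hkw Hd => [//|[|k]] // _ /= Hfix _.
  case: (phiP Pw) => g [Ha Hb _ _]; rewrite Hfix in Hb.
  by move: (S2 Pw Hb Ha); rewrite ltxx.
pose x (t : nat) := iter t phi w.
have Hper := iter_period Hkw.
have Hpred : forall t : 'I_k, x t = phi (x (ord_pred t)).
  move=> t; rewrite /x /= -iterS Hper [in RHS]Hper.
  congr (iter _ phi w).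
  rewrite -[in RHS]addn1 modnDml addn1 prednK; last by rewrite addn_gt0 Hk orbT.
  by rewrite modnDr.
have HS : forall t : 'I_k, x (ordS t) = phi (x t).
  by move=> t; rewrite /x /= -iterS [in RHS]Hper.
pose fc (t : 'I_k) := odflt g0 (beta (x t)).
have Hfc : forall t : 'I_k, exists g, [/\ alpha (x (ord_pred t)) = Some g,
     beta (x t) = Some g, fc t = g & uf g (x (ord_pred t)) < uf g (x t)].
  move=> t; case: (phiP (Pit (ord_pred t))) => g [H1 H2 _ H4]; exists g.
  have Ht := Hpred t; rewrite /x in Ht; rewrite /fc /x Ht H2; split => //.
exists k, fc, (fun t => x t); split => //.
- move=> t t' E.
  have B : forall u : 'I_k, beta (x u) = Some (fc u).
    by move=> u; case: (Hfc u) => g [_ H2 H3 _]; rewrite H2 H3.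
  have Bt := B t; rewrite E in Bt; have EE := Mb Bt (B t').
  by apply: val_inj; apply: Hd; [exact: ltn_ord | exact: ltn_ord |].
- by move=> t t' E; apply: val_inj; apply: Hd; [exact: ltn_ord | exact: ltn_ord | exact: E].
- by move=> t; case: (Hfc t) => g [_ _ -> ->].
- move=> t; case: (Hfc t) => h [_ Hb -> _].
  case: (Hfc (ordS t)) => g [Ha _ -> _].
  move: Ha; rewrite ordSK => Ha.
  exact: (S2 (Pit t) Hb Ha).
Qed.
End Cycle.
Section Market.
Variables (R : realFieldType) (m n : nat).
Variables (uf : 'I_m -> 'I_n -> R) (uw : 'I_m -> 'I_n -> R).
Hypothesis ufpos : forall i j, 0 < uf i j.
Hypothesis uwpos : forall i j, 0 < uw i j.
Hypothesis ufinj : forall i, injective (uf i).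
Hypothesis uwinj : forall j, injective (fun i => uw i j).

Definition astable (acc : 'I_n -> {set 'I_m}) (mu : matching m n) : Prop :=
  [/\ is_matching mu,
      (forall i j, mu j = Some i -> i \in acc j)
    & (forall i j, i \in acc j ->
         ~ (firm_util uf mu i < uf i j /\ worker_util uw mu j < uw i j))].

Lemma firm_utilP (mu : matching m n) i : is_matching mu ->
  (exists j, mu j = Some i /\ firm_util uf mu i = uf i j) \/
  ((forall j, mu j <> Some i) /\ firm_util uf mu i = 0).
Proof.
move=> Hm; rewrite /firm_util; case: pickP => [j /eqP Hj|H].
  by left; exists j.
by right; split => // j Hj; move: (H j); rewrite Hj eqxx.
Qed.

Lemma firm_util_match (mu : matching m n) i j :
  is_matching mu -> mu j = Some i -> firm_util uf mu i = uf i j.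
Proof.
move=> Hm Hj; case: (firm_utilP i Hm) => [[j' [Hj' ->]]|[H _]].
  by rewrite (Hm _ _ _ Hj' Hj).
by case: (H j).
Qed.

Lemma firm_util_ge0 (mu : matching m n) i : is_matching mu -> 0 <= firm_util uf mu i.
Proof.
move=> Hm; case: (firm_utilP i Hm) => [[j [_ ->]]|[_ ->]] //.
exact: ltW.
Qed.

Lemma worker_util_ge0 (mu : matching m n) j : 0 <= worker_util uw mu j.
Proof. by rewrite /worker_util; case: (mu j) => // i; exact: ltW. Qed.

Lemma worker_util_some (mu : matching m n) j i :
  mu j = Some i -> worker_util uw mu j = uw i j.
Proof. by rewrite /worker_util => ->. Qed.

Lemma uf_lt i j j' : j != j' -> uf i j <= uf i j' -> uf i j < uf i j'.
Proof.
move=> Hne Hle; rewrite lt_neqAle Hle andbT; apply/negP => /eqP E.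
by move/negP: Hne; apply; apply/eqP; exact: (ufinj E).
Qed.

Lemma uw_lt j i i' : i != i' -> uw i j <= uw i' j -> uw i j < uw i' j.
Proof.
move=> Hne Hle; rewrite lt_neqAle Hle andbT; apply/negP => /eqP E.
by move/negP: Hne; apply; apply/eqP; exact: (uwinj E).
Qed.

Lemma opposition acc (mu1 mu2 : matching m n) :
  astable acc mu1 -> astable acc mu2 ->
  (forall i, firm_util uf mu2 i <= firm_util uf mu1 i) ->
  forall j, worker_util uw mu1 j <= worker_util uw mu2 j.
Proof.
move=> [M1 IR1 _] [M2 IR2 NB2] Hf j.
rewrite leNgt; apply/negP => Hlt.
case E1: (mu1 j) => [i|]; last first.
  by move: Hlt; rewrite /worker_util E1 ltNge worker_util_ge0.
move: Hlt; rewrite (worker_util_some E1) => Hlt.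
apply: (NB2 i j (IR1 _ _ E1)); split => //.
have H1 := Hf i; rewrite (firm_util_match M1 E1) in H1.
case: (firm_utilP i M2) => [[j' [Ej' Fu]]|[_ ->]]; last exact: ufpos.
rewrite Fu; apply: uf_lt => //; rewrite Fu in H1.
apply/eqP => Ejj; subst j'.
  by move: Hlt; rewrite (worker_util_some Ej') ltxx.
by [].
Qed.


Section DAsec.
Variable acc : 'I_n -> {set 'I_m}.
Local Notation rejT := ('I_m -> {set 'I_n}).
Local Notation step := (DA_step uf uw acc).
Local Notation propose := (DA_propose uf).
Local Notation holder := (DA_holder uf uw acc).

Lemma holderP (r : rejT) j i : holder r j = Some i ->
  [/\ i \in acc j, propose r i = Some j &
      forall i', i' \in acc j -> propose r i' = Some j -> uw i' j <= uw i j].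
Proof.
rewrite /DA_holder => /bestP [Hi H]; move: Hi; rewrite inE => /andP[Ha /eqP Hp].
split => // i' Ha' Hp'; apply: H; by rewrite inE Ha' Hp' eqxx.
Qed.

Lemma holder_ex (r : rejT) j i : i \in acc j -> propose r i = Some j ->
  exists i', holder r j = Some i' /\ uw i j <= uw i' j.
Proof.
move=> Ha Hp.
have Hin : i \in [set i in acc j | propose r i == Some j] by rewrite inE Ha Hp eqxx.
case: (best_None (fun i => uw i j) Hin) => i' Hb; exists i'; split => //.
by case: (holderP Hb) => _ _ H; apply: H.
Qed.

Lemma proposeP (r : rejT) i j : propose r i = Some j ->
  j \notin r i /\ forall j', j' \notin r i -> uf i j' <= uf i j.
Proof.
rewrite /DA_propose => /bestP [Hj H]; move: Hj; rewrite inE => Hj; split => //.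
by move=> j' Hj'; apply: H; rewrite inE.
Qed.

Lemma propose_ex (r : rejT) i j : j \notin r i -> exists j', propose r i = Some j' /\ uf i j <= uf i j'.
Proof.
move=> Hj; have Hin : j \in ~: r i by rewrite inE.
case: (best_None (uf i) Hin) => j' Hb; exists j'; split => //.
by case: (proposeP Hb) => _ H; apply: H.
Qed.

Lemma propose_ext (r r' : rejT) i : r i = r' i -> propose r i = propose r' i.
Proof. by rewrite /DA_propose => ->. Qed.

Lemma step_sub (r : rejT) i : r i \subset step r i.
Proof.
rewrite /DA_step; case: (propose r i) => // j; case: ifP => // _.
exact: subsetUr.
Qed.

Lemma step_new (r : rejT) i j : j \in step r i -> j \notin r i ->
  propose r i = Some j /\ holder r j != Some i.
Proof.
rewrite /DA_step; case E: (propose r i) => [j'|]; last by move=> ->.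
case: ifP => [_ -> //|/negbT Hh]; rewrite in_setU1 => /orP[/eqP -> _|-> //].
by split.
Qed.

Lemma step_held (r : rejT) i j : propose r i = Some j -> holder r j = Some i -> step r i = r i.
Proof. by rewrite /DA_step => -> ->; rewrite eqxx. Qed.

Lemma holder_persist (r : rejT) j i : holder r j = Some i ->
  exists i', holder (step r) j = Some i' /\ uw i j <= uw i' j.
Proof.
move=> Hh; case: (holderP Hh) => Ha Hp _.
have Hs := step_held Hp Hh.
have Hp' : propose (step r) i = Some j by rewrite (propose_ext (r' := r)).
exact: holder_ex Ha Hp'.
Qed.

Definition Inv1 (r : rejT) := forall i j, j \in r i -> i \in acc j ->
  exists i', holder r j = Some i' /\ uw i j < uw i' j.

Lemma Inv1_step (r : rejT) : Inv1 r -> Inv1 (step r).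
Proof.
move=> I i j Hj Ha.
case: (boolP (j \in r i)) => Hr.
  case: (I _ _ Hr Ha) => i' [Hh Hlt].
  case: (holder_persist Hh) => i'' [Hh' Hle]; exists i''; split => //.
  exact: lt_le_trans Hlt Hle.
case: (step_new Hj Hr) => Hp Hn.
case: (holder_ex Ha Hp) => i' [Hh Hle].
case: (holder_persist Hh) => i'' [Hh' Hle']; exists i''; split => //.
apply: lt_le_trans Hle'; apply: uw_lt Hle.
by apply/eqP => E; subst i'; move: Hn; rewrite Hh eqxx.
Qed.

Definition Inv2 (mu : matching m n) (r : rejT) := forall i j, mu j = Some i -> j \notin r i.

Lemma Inv2_step mu (r : rejT) : astable acc mu -> Inv2 mu r -> Inv2 mu (step r).
Proof.
move=> [M IR NB] I i j Hmu; apply/negP => Hj.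
have Hr := I _ _ Hmu.
case: (step_new Hj Hr) => Hp Hn.
case: (holder_ex (IR _ _ Hmu) Hp) => i' [Hh Hle].
have Hne : i != i' by apply/eqP => E; subst i'; move: Hn; rewrite Hh eqxx.
have Hlt := uw_lt Hne Hle.
case: (holderP Hh) => Ha' Hp' _.
apply: (NB i' j Ha'); split; last by rewrite (worker_util_some Hmu).
case: (firm_utilP i' M) => [[j' [Ej' ->]]|[_ ->]]; last exact: ufpos.
case: (proposeP Hp') => _ H.
apply: uf_lt; last by apply: H; apply: I.
apply/eqP => E; subst j'; move: Hmu; rewrite Ej' => -[E]; subst i'.
by rewrite eqxx in Hne.
Qed.

Definition meas (r : 'I_m -> {set 'I_n}) := (\sum_i #|r i|)%N.

Lemma meas_bound (r : rejT) : (meas r <= m * n)%N.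
Proof.
rewrite /meas; apply: (@leq_trans (\sum_(i < m) n)).
  by apply: leq_sum => i _; rewrite -[X in (_ <= X)%N](card_ord n); exact: max_card.
by rewrite big_const_ord iter_addn_0 mulnC.
Qed.

Lemma step_meas (r : rejT) : (forall i, step r i = r i) \/ (meas r < meas (step r))%N.
Proof.
case: (boolP [forall i, step r i == r i]) => [/forallP H|/forallP H].
  by left => i; apply/eqP.
right; have [i0 Hi0] : exists i0, step r i0 != r i0.
  by apply/existsP; rewrite -negb_forall; apply/forallP.
rewrite /meas (bigD1 i0) //= [X in (_ < X)%N](bigD1 i0) //=.
rewrite -addSn; apply: leq_add; last first.
  by apply: leq_sum => i _; apply: subset_leq_card; apply: step_sub.
apply: proper_card; rewrite properEneq step_sub andbT eq_sym; exact: Hi0.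
Qed.
End DAsec.

Section DAfinal.
Variable acc : 'I_n -> {set 'I_m}.
Local Notation rejT := ('I_m -> {set 'I_n}).
Local Notation step := (DA_step uf uw acc).
Local Notation propose := (DA_propose uf).
Local Notation holder := (DA_holder uf uw acc).
Local Notation Rs := (DA_rejections uf uw acc).

Definition fixedb (r : rejT) := [forall i, step r i == r i].

Lemma fix_iter (r : rejT) : fixedb r -> forall k, iter k step r = r.
Proof.
move/forallP => H; have E : step r = r.
  by apply: functional_extensionality => i; apply/eqP.
by elim=> [|k IH] //=; rewrite IH E.
Qed.

Lemma DA_fix : forall i, step Rs i = Rs i.
Proof.
have C : forall t, (exists2 t', (t' <= t)%N & fixedb (iter t' step (fun _ => set0)))
   \/ (t <= meas (iter t step (fun _ => set0)))%N.
  elim=> [|t [IH|IH]]; [by right| by left; case: IH => t' Ht' Hf; exists t' => //; exact: leqW|].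
  case: (step_meas acc (iter t step (fun _ => set0))) => [H|H].
    by left; exists t => //; apply/forallP => i; apply/eqP; apply: H.
  by right; rewrite iterS; exact: leq_ltn_trans IH H.
case: (C (m * n).+1) => [[t' Ht' Hf]|H]; last first.
  by move: (leq_trans H (meas_bound _)); rewrite ltnn.
move=> i; rewrite /DA_rejections -(subnK Ht') iterD (fix_iter Hf).
by move/forallP: Hf => /(_ i) /eqP.
Qed.

Lemma DA_held i j : propose Rs i = Some j -> holder Rs j = Some i.
Proof.
move=> Hp; case E: (holder Rs j) => [i'|].
  case: (eqVneq i' i) => [-> //|Hne].
  have := DA_fix i; rewrite /DA_step Hp E (negbTE (_ : Some i' != Some i)) => [H|]; last first.
    by apply/eqP => -[]; apply/eqP.
  case: (proposeP Hp) => Hn _; move: Hn; rewrite -H in_setU1 eqxx //.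
have := DA_fix i; rewrite /DA_step Hp E => H.
case: (proposeP Hp) => Hn _; move: Hn; rewrite -H in_setU1 eqxx //.
Qed.

Lemma DAE j : DA uf uw acc j = holder Rs j.
Proof. by rewrite /DA ffunE. Qed.

Lemma Inv1_Rs : Inv1 acc Rs.
Proof.
rewrite /DA_rejections; elim: (m * n).+1 => [|k IH] /=.
  by move=> i j; rewrite inE.
exact: Inv1_step.
Qed.

Lemma Inv2_Rs mu : astable acc mu -> Inv2 mu Rs.
Proof.
move=> Hs; rewrite /DA_rejections; elim: (m * n).+1 => [|k IH] /=.
  by move=> i j _; rewrite inE.
exact: Inv2_step.
Qed.

Lemma DA_matching : is_matching (DA uf uw acc).
Proof.
move=> j j' i; rewrite !DAE => /holderP [_ H1 _] /holderP [_ H2 _].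
by move: H1; rewrite H2 => -[].
Qed.

Lemma DA_stable : astable acc (DA uf uw acc).
Proof.
split; first exact: DA_matching.
  by move=> i j; rewrite DAE => /holderP [].
move=> i j Ha [Hf Hw].
case: (boolP (j \in Rs i)) => Hr.
  case: (Inv1_Rs Hr Ha) => i' [Hh Hlt].
  by move: Hw; rewrite (worker_util_some (_ : DA uf uw acc j = Some i')) ?DAE // ltNge ltW.
case: (propose_ex Hr) => j' [Hp Hle].
have Hd : DA uf uw acc j' = Some i by rewrite DAE; apply: DA_held.
by move: Hf; rewrite (firm_util_match DA_matching Hd) ltNge Hle.
Qed.

Lemma DA_opt mu : astable acc mu ->
  forall i, firm_util uf mu i <= firm_util uf (DA uf uw acc) i.
Proof.
move=> Hs i; have [M _ _] := Hs.
case: (firm_utilP i M) => [[j [Hj ->]]|[_ ->]]; last exact: firm_util_ge0 DA_matching.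
case: (propose_ex (Inv2_Rs Hs Hj)) => j' [Hp Hle].
have Hd : DA uf uw acc j' = Some i by rewrite DAE; apply: DA_held.
by rewrite (firm_util_match DA_matching Hd).
Qed.

End DAfinal.

Lemma worker_util_none (mu : matching m n) j : mu j = None -> worker_util uw mu j = 0.
Proof. by rewrite /worker_util => ->. Qed.

Lemma worker_util_pos (mu : matching m n) j x : x <= worker_util uw mu j -> 0 < x ->
  exists i, mu j = Some i /\ worker_util uw mu j = uw i j.
Proof.
case E: (mu j) => [i|]; first by exists i; rewrite (worker_util_some E).
by rewrite (worker_util_none E) => H1 H2; move: (le_lt_trans H1 H2); rewrite ltxx.
Qed.

Lemma firm_util_pos (mu : matching m n) i x : is_matching mu ->
  x <= firm_util uf mu i -> 0 < x ->
  exists j, mu j = Some i /\ firm_util uf mu i = uf i j.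
Proof.
move=> M; case: (firm_utilP i M) => [[j [H1 H2]]|[_ ->]]; first by exists j.
by move=> H1 H2; move: (le_lt_trans H1 H2); rewrite ltxx.
Qed.

Section Dev.
Variables (s s' : 'I_n -> {set 'I_m}) (w : 'I_n) (f : 'I_m).
Hypothesis Hsw : s' w = f |: s w.
Hypothesis Hso : forall j, j != w -> s' j = s j.
Variables (nu nu' : matching m n).
Hypothesis Hnu : astable s nu.
Hypothesis Hopt : forall mu, astable s mu -> forall i, firm_util uf mu i <= firm_util uf nu i.
Hypothesis Hnu' : astable s' nu'.

Lemma s_sub i j : i \in s j -> i \in s' j.
Proof.
case: (eqVneq j w) => [->|H]; first by rewrite Hsw in_setU1 => ->; rewrite orbT.
by rewrite Hso.
Qed.

Lemma stable_back mu : astable s' mu -> mu w <> Some f -> astable s mu.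
Proof.
move=> [M IR NB] Hw; split => //.
  move=> i j Hj; have := IR _ _ Hj.
  case: (eqVneq j w) => [E|H]; last by rewrite Hso.
  subst j; rewrite Hsw in_setU1 => /orP [/eqP E|//].
  by subst i; case: Hw.
by move=> i j Ha; apply: NB; apply: s_sub.
Qed.

Lemma harm : worker_util uw nu w <= worker_util uw nu' w \/ nu' w = Some f.
Proof.
case: (boolP (nu' w == Some f)) => [/eqP E|/eqP E]; [by right | left].
have Hb : astable s nu' by apply: stable_back.
exact: (opposition Hnu Hb (Hopt Hb)).
Qed.

Lemma gain : firm_util uf nu f < uf f w -> worker_util uw nu w < uw f w ->
  worker_util uw nu w < worker_util uw nu' w.
Proof.
move=> Hf Hw.
case: (boolP (nu' w == Some f)) => [/eqP E|/eqP E].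
  by rewrite (worker_util_some E).
have Hb : astable s nu' by apply: stable_back.
have Hle := Hopt Hb f.
have [_ _ NB] := Hnu'.
have Ha : f \in s' w by rewrite Hsw setU11.
apply: lt_le_trans Hw _; rewrite leNgt; apply/negP => H.
by apply: (NB f w Ha); split => //; exact: le_lt_trans Hle Hf.
Qed.

Lemma harm_cycle g : nu' w = Some f -> nu w = Some g -> uw f w < uw g w ->
  pref_cycle uf uw.
Proof.
move=> H1 H2 H3.
have [M IR NB] := Hnu.
have [M' IR' NB'] := Hnu'.
pose P x := exists g h, [/\ nu x = Some g, nu' x = Some h & uw h x < uw g x].
apply: (@build_cycle _ _ _ uf uw nu nu' P w M M').
- by exists g, f.
- move=> x [g1 [h1 [Ex Ex' Hlt]]].
  have Ha : g1 \in s' x by apply: s_sub; apply: IR.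
  have Hfu : uf g1 x <= firm_util uf nu' g1.
    rewrite leNgt; apply/negP => Hf; apply: (NB' g1 x Ha); split => //.
    by rewrite (worker_util_some Ex').
  case: (firm_util_pos M' Hfu (ufpos g1 x)) => y [Ey Fy].
  have Hxy : x != y.
    apply/eqP => E; subst y; move: Ey; rewrite Ex' => -[E]; subst h1.
    by move: Hlt; rewrite ltxx.
  have Hlt' : uf g1 x < uf g1 y by apply: uf_lt => //; rewrite -Fy.
  exists g1, y; split => //.
  case: (eqVneq y w) => [->|Hyw]; first by exists g, f.
  have Ha2 : g1 \in s y by rewrite -Hso //; apply: IR'.
  have Hwu : uw g1 y <= worker_util uw nu y.
    rewrite leNgt; apply/negP => Hw; apply: (NB g1 y Ha2); split => //.
    by rewrite (firm_util_match M Ex).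
  case: (worker_util_pos Hwu (uwpos g1 y)) => g2 [Eg2 Wg2].
  exists g2, g1; split => //; apply: uw_lt; last by rewrite -Wg2.
  apply/eqP => E; subst g2; move/eqP: Hxy; apply; exact: (M _ _ _ Ex Eg2).
- move=> x g1 h1 [g2 [h2 [Ex Ex' Hlt]]] Eb Ea.
  by move: Eb Ea; rewrite Ex Ex' => -[<-] [<-].
Qed.
End Dev.

Section Dev2.
Variables (s' : 'I_n -> {set 'I_m}) (w : 'I_n).
Hypothesis Hso : forall j, j != w -> s' j = setT.
Variables (nu nu' : matching m n).
Hypothesis Hnu : astable (fun _ => setT) nu.
Hypothesis Hnu' : astable s' nu'.

Lemma exist_cycle : worker_util uw nu w < worker_util uw nu' w -> pref_cycle uf uw.
Proof.
move=> Hlt0.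
have [M IR NB] := Hnu.
have [M' IR' NB'] := Hnu'.
pose P x := exists h, nu' x = Some h /\ worker_util uw nu x < uw h x.
have Pw : P w.
  case E: (nu' w) => [h|]; first by exists h; rewrite -(worker_util_some E).
  by move: Hlt0; rewrite (worker_util_none E) ltNge worker_util_ge0.
apply: (@build_cycle _ _ _ uf uw nu' nu P w M' M Pw).
- move=> x [h [Ex' Hlt]].
  have Hfu : uf h x <= firm_util uf nu h.
    rewrite leNgt; apply/negP => Hf; apply: (NB h x (in_setT h)); split => //.
  case: (firm_util_pos M Hfu (ufpos h x)) => y [Ey Fy].
  have Hxy : x != y.
    apply/eqP => E; subst y; move: Hlt; rewrite (worker_util_some Ey) ltxx //.
  have Hlt' : uf h x < uf h y by apply: uf_lt => //; rewrite -Fy.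
  exists h, y; split => //.
  case: (eqVneq y w) => [->|Hyw] //.
  have Ha2 : h \in s' y by rewrite Hso // in_setT.
  have Hwu : uw h y <= worker_util uw nu' y.
    rewrite leNgt; apply/negP => Hw; apply: (NB' h y Ha2); split => //.
    by rewrite (firm_util_match M' Ex').
  case: (worker_util_pos Hwu (uwpos h y)) => h2 [Eh2 Wh2].
  exists h2; split => //; rewrite (worker_util_some Ey); apply: uw_lt; last by rewrite -Wh2.
  apply/eqP => E; subst h2; move/eqP: Hxy; apply; exact: (M' _ _ _ Ex' Eh2).
- move=> x g1 h1 [h2 [Ex' Hlt]] Eb Ea.
  by move: Ex'; rewrite Ea => -[->]; rewrite -(worker_util_some Eb).
Qed.
End Dev2.

Section SPCsec.
Variables (sf : {perm 'I_m}) (sw : {perm 'I_n}).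
Hypothesis HSPC : SPC_with uf uw sf sw.

Definition Hpre (mu : matching m n) t := forall (p0 : 'I_m) (q0 : 'I_n),
  val p0 = val q0 -> (val p0 < t)%N -> mu (sw q0) = Some (sf p0).

Lemma Hpre_mono mu t t' : Hpre mu t -> (t' <= t)%N -> Hpre mu t'.
Proof. by move=> H Ht p0 q0 E Hl; apply: H => //; exact: leq_trans Hl Ht. Qed.

Lemma Hpre_all mu t : Hpre mu m -> Hpre mu t.
Proof. by move=> H p0 q0 E _; apply: H => //; exact: ltn_ord. Qed.

Lemma L1 mu (q : 'I_n) (p' : 'I_m) : is_matching mu -> Hpre mu (val q) -> mu (sw q) = Some (sf p') ->
  (val q <= val p')%N.
Proof.
move=> M H E; rewrite leqNgt; apply/negP => Hlt.
have Hn : (val p' < n)%N by apply: ltn_trans Hlt (ltn_ord q).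
have E2 := H p' (Ordinal Hn) erefl Hlt.
have := M _ _ _ E2 E => /perm_inj Eq.
by move: Hlt; rewrite -Eq /= ltnn.
Qed.

Lemma L2 mu (p : 'I_m) (q' : 'I_n) : is_matching mu -> Hpre mu (val p) -> mu (sw q') = Some (sf p) ->
  (val p <= val q')%N.
Proof.
move=> M H E; rewrite leqNgt; apply/negP => Hlt.
have Hm : (val q' < m)%N by apply: ltn_trans Hlt (ltn_ord p).
have := H (Ordinal Hm) q' erefl Hlt; rewrite E => -[] /perm_inj Ep.
by move: Hlt; rewrite Ep ltnn.
Qed.

Lemma prefix_block mu (p : 'I_m) (q : 'I_n) : is_matching mu -> val p = val q ->
  Hpre mu (val p) -> mu (sw q) <> Some (sf p) ->
  firm_util uf mu (sf p) < uf (sf p) (sw q) /\ worker_util uw mu (sw q) < uw (sf p) (sw q).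
Proof.
move=> M Epq H Hne; split.
  case: (firm_utilP (sf p) M) => [[j [Ej ->]]|[_ ->]]; last exact: ufpos.
  have Ej' : mu (sw ((sw^-1)%g j)) = Some (sf p) by rewrite permKV.
  have Hle := L2 M H Ej'.
  have Hq : (sw^-1)%g j != q by apply/eqP => E; apply: Hne; rewrite -E.
  rewrite -{1}(permKV sw j); apply: (proj1 (HSPC Epq)).
  rewrite ltn_neqAle -Epq Hle andbT; apply/eqP => E.
  by move/eqP: Hq; apply; apply: val_inj; rewrite /= -E Epq.
case E: (mu (sw q)) => [i|]; last by rewrite (worker_util_none E).
rewrite (worker_util_some E).
have Ei : mu (sw q) = Some (sf ((sf^-1)%g i)) by rewrite permKV.
have Hpq : Hpre mu (val q) by rewrite -Epq.
have Hle := L1 M Hpq Ei.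
have Hp : (sf^-1)%g i != p by apply/eqP => E2; apply: Hne; rewrite E -E2 permKV.
rewrite -{1}(permKV sf i); apply: (proj2 (HSPC Epq)).
rewrite ltn_neqAle Epq Hle andbT; apply/eqP => E2.
by move/eqP: Hp; apply; apply: val_inj; rewrite /= -E2 Epq.
Qed.

Lemma spc_prefix acc mu t : astable acc mu ->
  (forall (p0 : 'I_m) (q0 : 'I_n), val p0 = val q0 -> (val p0 < t)%N -> sf p0 \in acc (sw q0)) ->
  Hpre mu t.
Proof.
move=> [M IR NB]; elim: t => [|t IH] Hacc; first by move=> p0 q0 _.
have IH' : Hpre mu t.
  by apply: IH => p0 q0 E Hl; apply: Hacc => //; exact: ltnW.
move=> p0 q0 E Hl; rewrite ltnS leq_eqVlt in Hl.
case/orP: Hl => [/eqP Ht|Hl]; last exact: IH'.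
case: (boolP (mu (sw q0) == Some (sf p0))) => [/eqP //|/eqP Hne].
have Ha : sf p0 \in acc (sw q0) by apply: Hacc => //; rewrite Ht.
have Hp0 : Hpre mu (val p0) by rewrite Ht.
have H := prefix_block M E Hp0 Hne.
by case: (NB _ _ Ha H).
Qed.

Lemma late_unmatched mu (q : 'I_n) : is_matching mu -> Hpre mu m -> (m <= val q)%N ->
  mu (sw q) = None.
Proof.
move=> M H Hq; case E: (mu (sw q)) => [i|] //.
have Ei : mu (sw q) = Some (sf ((sf^-1)%g i)) by rewrite permKV.
have Hq' : Hpre mu (val q) by move=> p0 q0 E0 _; apply: H => //; exact: ltn_ord.
have Hle := L1 M Hq' Ei.
by move: (leq_trans Hq Hle); rewrite leqNgt ltn_ord.
Qed.

End SPCsec.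

Lemma stable_astable mu : stable uf uw mu -> astable (fun _ => setT) mu.
Proof. by move=> [M _ NB]; split => // i j _; rewrite in_setT. Qed.

Lemma block_or_stable s mu : astable s mu ->
  stable uf uw mu \/ exists f w, [/\ f \notin s w, firm_util uf mu f < uf f w & worker_util uw mu w < uw f w].
Proof.
move=> [M IR NB].
case: (boolP [exists f, exists w, [&& f \notin s w, firm_util uf mu f < uf f w & worker_util uw mu w < uw f w]]).
  move/existsP => [f /existsP [w /and3P [H1 H2 H3]]]; right; by exists f, w.
move=> H; left; split => //.
  by move=> i j _; split; apply: ltW.
move=> i j [H1 H2]; move/negP: H; apply; apply/existsP; exists i; apply/existsP; exists j.
rewrite H1 H2 /= andbT; apply/negP => Hin; exact: (NB i j Hin (conj H1 H2)).
Qed.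

Lemma exist_state : (~ pref_cycle uf uw \/ exists sf sw, SPC_with uf uw sf sw) ->
  forall (s' : 'I_n -> {set 'I_m}) w, (forall j, j != w -> s' j = setT) ->
  forall nu nu', astable (fun _ => setT) nu -> astable s' nu' ->
  worker_util uw nu' w <= worker_util uw nu w.
Proof.
move=> Hc s' w Hso nu nu' Hnu Hnu'.
case: Hc => [Hnc|[sf [sw HS]]].
  rewrite leNgt; apply/negP => Hlt; apply: Hnc.
  exact: (exist_cycle Hso Hnu Hnu' Hlt).
have [M IR NB] := Hnu; have [M' IR' NB'] := Hnu'.
have Hall : Hpre sf sw nu m by apply: (spc_prefix HS Hnu) => *; rewrite in_setT.
pose q := ((sw^-1)%g w).
have Ew : sw q = w by rewrite /q permKV.
have Hq : Hpre sf sw nu' (val q).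
  apply: (spc_prefix HS Hnu') => p0 q0 E Hl; rewrite Hso ?in_setT //.
  apply/eqP => E2; rewrite -Ew in E2; move/perm_inj: E2 => E2.
  by move: Hl; rewrite E E2 ltnn.
case: (leqP m (val q)) => Hmq.
  have Hm : Hpre sf sw nu' m := Hpre_mono Hq Hmq.
  have := late_unmatched M' Hm Hmq; rewrite Ew => E.
  by rewrite (worker_util_none E) worker_util_ge0.
pose p := Ordinal Hmq.
have Enu : nu w = Some (sf p) by rewrite -Ew; apply: Hall.
rewrite (worker_util_some Enu).
case E: (nu' w) => [i|]; last by rewrite (worker_util_none E) ltW.
rewrite (worker_util_some E).
have Ei : nu' (sw q) = Some (sf ((sf^-1)%g i)) by rewrite permKV Ew.
have Hle := L1 M' Hq Ei.
rewrite -(permKV sf i).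
case: (eqVneq ((sf^-1)%g i) p) => [->//|Hne].
have Hlt2 : (val p < val ((sf^-1)%g i))%N.
  rewrite ltn_neqAle Hle andbT; apply/eqP => E2; move/eqP: Hne; apply; apply: val_inj.
  by rewrite /= -E2.
have := proj2 (HS p q erefl) _ Hlt2; rewrite Ew => H; exact: ltW H.
Qed.

Lemma no_harm1 : ~ pref_cycle uf uw ->
  forall (s s' : 'I_n -> {set 'I_m}) w f, s' w = f |: s w -> (forall j, j != w -> s' j = s j) ->
  forall nu nu', astable s nu ->
  (forall mu, astable s mu -> forall i, firm_util uf mu i <= firm_util uf nu i) ->
  astable s' nu' -> worker_util uw nu w <= worker_util uw nu' w.
Proof.
move=> Hnc s s' w f Hsw Hso nu nu' Hnu Hopt Hnu'.
case: (harm Hsw Hso Hnu Hopt Hnu') => // E.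
case E2: (nu w) => [g|]; last by rewrite (worker_util_none E2) worker_util_ge0.
rewrite (worker_util_some E) (worker_util_some E2) leNgt; apply/negP => Hlt.
exact: Hnc (harm_cycle Hsw Hso Hnu Hnu' E E2 Hlt).
Qed.

Lemma no_harm2 (sf : {perm 'I_m}) (sw : {perm 'I_n}) t : SPC_with uf uw sf sw ->
  (t < n)%N ->
  forall (s s' : 'I_n -> {set 'I_m}) w f, s' w = f |: s w -> (forall j, j != w -> s' j = s j) ->
  forall nu nu', astable s nu ->
  (forall mu, astable s mu -> forall i, firm_util uf mu i <= firm_util uf nu i) ->
  astable s' nu' -> Hpre sf sw nu t ->
  (forall g, uw f w < uw g w -> exists p' : 'I_m, (val p' < t)%N /\ g = sf p') ->
  worker_util uw nu w <= worker_util uw nu' w.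
Proof.
move=> HS Htn s s' w f Hsw Hso nu nu' Hnu Hopt Hnu' Hpt Hstar.
have [M IR NB] := Hnu; have [M' IR' NB'] := Hnu'.
case: (harm Hsw Hso Hnu Hopt Hnu') => // E.
case E2: (nu w) => [g|]; last by rewrite (worker_util_none E2) worker_util_ge0.
rewrite (worker_util_some E) (worker_util_some E2) leNgt; apply/negP => Hlt.
case: (Hstar g Hlt) => p' [Hp' Eg].
have Hn : (val p' < n)%N by apply: ltn_trans Htn.
pose q' := Ordinal Hn.
have Eq' : nu (sw q') = Some (sf p') by apply: Hpt.
have Ew : sw q' = w by apply: (M _ _ _ Eq'); rewrite E2 Eg.
have Hp2 : Hpre sf sw nu' (val p').+1.
  apply: (spc_prefix HS Hnu') => p0 q0 E0 Hl.
  apply: (s_sub Hsw Hso); apply: IR; apply: Hpt => //.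
  by rewrite ltnS in Hl; exact: leq_ltn_trans Hl Hp'.
have := Hp2 p' q' erefl (ltnSn _); rewrite Ew E -Eg => -[E3].
by move: Hlt; rewrite E3 ltxx.
Qed.

Lemma eq_of_Hpre (sf : {perm 'I_m}) (sw : {perm 'I_n}) (nu mu : matching m n) :
  is_matching nu -> is_matching mu -> Hpre sf sw nu m -> Hpre sf sw mu m -> nu = mu.
Proof.
move=> M1 M2 H1 H2; apply/ffunP => j.
rewrite -(permKV sw j); set q := ((sw^-1)%g j).
case: (leqP m (val q)) => Hq.
  by rewrite (late_unmatched M1 H1 Hq) (late_unmatched M2 H2 Hq).
by rewrite (H1 (Ordinal Hq) q erefl Hq) (H2 (Ordinal Hq) q erefl Hq).
Qed.
End Market.

Lemma sum_strict (R : realFieldType) (T : finType) (P a b : T -> R) th :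
  (forall t, 0 < P t) -> (forall t, a t <= b t) -> a th < b th ->
  \sum_t P t * a t < \sum_t P t * b t.
Proof.
move=> HP Hab Hlt.
rewrite (bigD1 th) //= [X in _ < X](bigD1 th) //=.
apply: ltr_leD; first by rewrite ltr_pM2l.
by apply: ler_sum => t _; rewrite ler_pM2l.
Qed.

Theorem proposition2 (R : realFieldType) (m n : nat) (Theta : finType)
    (uf : Theta -> 'I_m -> 'I_n -> R) (uw : 'I_m -> 'I_n -> R)
    (Psi : Theta -> R) :
  economy uf uw Psi ->
  unique_stable uf uw ->
  no_pref_cycle uf uw \/ SPC_star uf uw ->
  (exists s : profile m n, BNE uf uw Psi s) /\
  (forall s : profile m n, BNE uf uw Psi s ->
     forall th, stable (uf th) uw (outcome uf uw s th)).
Proof.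
move=> [[Psipos _] ufinjT uwinjT ufposT uwposT] Huniq Hcase.
have Dst : forall th s, astable (uf th) uw s (outcome uf uw s th).
  by move=> th s; exact: (@DA_stable _ _ _ (uf th) uw uwinjT s).
have Dopt : forall th s mu, astable (uf th) uw s mu ->
    forall i, firm_util (uf th) mu i <= firm_util (uf th) (outcome uf uw s th) i.
  by move=> th s mu Hmu; exact: (@DA_opt _ _ _ (uf th) uw (ufposT th) (ufinjT th) uwinjT s mu Hmu).
have Hsp : forall th, ~ pref_cycle (uf th) uw \/ exists sf sw, SPC_with (uf th) uw sf sw.
  move=> th; case: Hcase => [H|[sf [sw [HS _]]]]; first by left; apply: H.
  by right; exists (sf th), (sw th).
split.
  exists (fun _ => setT) => w A; rewrite /exp_util.
  apply: ler_sum => th _; apply: ler_wpM2l; first exact: ltW (Psipos th).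
  have Hso : forall j, j != w -> deviate (fun _ => setT) w A j = setT.
    by move=> j Hj; rewrite /deviate (negbTE Hj).
  exact: (@exist_state _ _ _ (uf th) uw (ufposT th) uwposT (ufinjT th) uwinjT (Hsp th)
            (deviate (fun _ => setT) w A) w Hso _ _ (Dst th (fun _ => setT)) (Dst th _)).
move=> s Hbne th.
case: Hcase => [Hnc|[sf [sw [HS Hstar]]]].
  case: (@block_or_stable _ _ _ (uf th) uw (ufposT th) uwposT _ _ (Dst th s)) => //.
  move=> [f [w [Hfs Hf Hw]]]; exfalso.
  set s' := deviate s w (f |: s w).
  have Hsw : s' w = f |: s w by rewrite /s' /deviate eqxx.
  have Hso : forall j, j != w -> s' j = s j by move=> j Hj; rewrite /s' /deviate (negbTE Hj).
  have := Hbne w (f |: s w); rewrite leNgt => /negP; apply; rewrite /exp_util -/s'.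
  apply: (@sum_strict _ _ Psi (fun t => worker_util uw (outcome uf uw s t) w)
    (fun t => worker_util uw (outcome uf uw s' t) w) th Psipos).
    move=> th'.
    exact: (@no_harm1 _ _ _ (uf th') uw (ufposT th') uwposT (ufinjT th') uwinjT (Hnc th')
              s s' w f Hsw Hso _ _ (Dst th' s) (Dopt th' s) (Dst th' s')).
  exact: (gain Hsw Hso (Dopt th s) (Dst th s') Hf Hw).
have Main : forall t th0, Hpre (sf th0) (sw th0) (outcome uf uw s th0) t.
  elim=> [|t IH] th0; first by move=> p0 q0 _.
  move=> p q Epq Hlt; rewrite ltnS leq_eqVlt in Hlt.
  case/orP: Hlt => [/eqP Ht|Hlt]; last exact: IH.
  case: (boolP (outcome uf uw s th0 (sw th0 q) == Some (sf th0 p))) => [/eqP //|/eqP Hne].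
  exfalso.
  have Hp : Hpre (sf th0) (sw th0) (outcome uf uw s th0) (val p) by rewrite Ht; exact: IH.
  have [M IR NB] := Dst th0 s.
  have [Hf Hw] := @prefix_block _ _ _ (uf th0) uw (ufposT th0) uwposT _ _ (HS th0) _ p q M Epq Hp Hne.
  set f := sf th0 p in Hf Hw *; set w := sw th0 q in Hf Hw *.
  set s' := deviate s w (f |: s w).
  have Hsw : s' w = f |: s w by rewrite /s' /deviate eqxx.
  have Hso : forall j, j != w -> s' j = s j by move=> j Hj; rewrite /s' /deviate (negbTE Hj).
  have := Hbne w (f |: s w); rewrite leNgt => /negP; apply; rewrite /exp_util -/s'.
  apply: (@sum_strict _ _ Psi (fun t => worker_util uw (outcome uf uw s t) w)
    (fun t => worker_util uw (outcome uf uw s' t) w) th0 Psipos); last first.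
    exact: (gain Hsw Hso (Dopt th0 s) (Dst th0 s') Hf Hw).
  move=> th'.
  have Htn : (t < n)%N by rewrite -Ht Epq ltn_ord.
  apply: (@no_harm2 _ _ _ (uf th') uw (ufposT th') uwposT (ufinjT th') (sf th') (sw th') t (HS th') Htn
            s s' w f Hsw Hso _ _ (Dst th' s) (Dopt th' s) (Dst th' s') (IH th')).
  move=> g Hg; case: (Hstar th0 p q g Epq Hg th') => p' [Hp' Eg].
  by exists p'; rewrite -Ht.
have [mu [Hmu _]] := Huniq th.
have [M _ _] := Dst th s.
have Hmu' := stable_astable Hmu.
have [M2 _ _] := Hmu'.
have Hpm : Hpre (sf th) (sw th) mu m.
  have HH := (@spc_prefix _ _ _ (uf th) uw (ufposT th) uwposT _ _ (HS th) _ mu m Hmu').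
  apply: HH => *; by rewrite in_setT.
by rewrite (eq_of_Hpre M M2 (Main m th) Hpm).
Qed.
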